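(* For all integers $r\ge 3$ and $n\ge 2$, $$m_0(1,\underbrace{n,\dots,n}_{r})=n^{r-1}-(n-1)^{r-1}+n-1.$$
   Context: For integers $n_1\ge\dots\ge n_r$, let $X_\ell=[n_\ell]=\{1,\dots,n_\ell\}$. An $r$-partite $r$-graph is a family $\mathcal F\subseteq X_1\times\dots\times X_r$; its vertices are the pairs $(\ell,x)$ with $x\in X_\ell$, and an edge $A=(a_1,\dots,a_r)$ contains the vertex $(\ell,x)$ iff $a_\ell=x$. Two edges $A,B$ are disjoint if $A[\ell]\ne B[\ell]$ for all $\ell$ (where $A[\ell]$ is the $\ell$-th coordinate). The matching number $\nu(\mathcal F)$ is the maximum number of pairwise disjoint edges of $\mathcal F$. A transversal is a set $T$ of vertices such that every edge of $\mathcal F$ contains a vertex of $T$; $\tau(\mathcal F)$ is the minimum size of a transversal. For integers $r\ge 3$ and $n_1\ge\dots\ge n_r>s\ge 1$, $m_0(s,n_1,\dots,n_r)$ denotes the maximum of $|\mathcal F|$ over all $\mathcal F\subseteq X_1\times\dots\times X_r$ with $\nu(\mathcal F)\le s<\tau(\mathcal F)$. *)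

(* Defs.v *)
From mathcomp Require Import all_boot all_order.
Set Implicit Arguments. Unset Strict Implicit. Unset Printing Implicit Defensive.

(* r-partite r-graphs on X_1 x ... x X_r, with X_l = [n_l] encoded as 'I_(ns l)
   (the element i : 'I_(ns l) stands for i+1 in [n_l]). *)
Section Rpartite.
Variables (r : nat) (ns : 'I_r -> nat).

Definition edge := {dffun forall l : 'I_r, 'I_(ns l)}.
Definition vertex := {l : 'I_r & 'I_(ns l)}.

Definition vertex_of (A : edge) (l : 'I_r) : vertex := Tagged (fun l => 'I_(ns l)) (A l).

Definition disjoint_edges (A B : edge) : bool := [forall l, A l != B l].

Definition is_matching (M : {set edge}) : bool :=
  [forall A in M, forall B in M, (A != B) ==> disjoint_edges A B].

Definition nu (F : {set edge}) : nat :=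
  \max_(M : {set edge} | (M \subset F) && is_matching M) #|M|.

Definition is_transversal (F : {set edge}) (T : {set vertex}) : bool :=
  [forall A in F, exists l, vertex_of A l \in T].

(* covering number: minimum size of a transversal (the set of all vertices
   is always a transversal, so the minimum exists) *)
Definition tau (F : {set edge}) : nat :=
  \big[minn/#|[set: vertex]|]_(T : {set vertex} | is_transversal F T) #|T|.

Definition m0 (s : nat) : nat :=
  \max_(F : {set edge} | (nu F <= s) && (s < tau F)) #|F|.
End Rpartite.

(* Main.v *)
Require Import Defs.
From mathcomp Require Import all_boot all_order.
From mathcomp Require Import zify.
Set Implicit Arguments. Unset Strict Implicit. Unset Printing Implicit Defensive.

Section Arith.
Variable n : nat.
Hypothesis n2 : 1 < n.
Fixpoint u (k : nat) : nat := if k is k'.+1 then n.-1 * u k' + n ^ k' else 0.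

Lemma uE k : u k + n.-1 ^ k = n ^ k.
Proof.
have hn : (n.-1).+1 = n by rewrite prednK // ltnW.
elim: k => [|k IH] //=; rewrite !expnS -IH.
move: (u k) (n.-1 ^ k) => v e; rewrite -{3}hn. lia.
Qed.

Lemma u_low k : n ^ k <= n.-1 * u k + 1.
Proof.
have hn : (n.-1).+1 = n by rewrite prednK // ltnW.
have ha : 1 <= n.-1 by rewrite -ltnS hn.
elim: k => [|k IH]; first by rewrite /= expn0 muln0. rewrite [u _]/= expnS.
have h1 : 0 < n ^ k by rewrite expn_gt0 ltnW.
move: IH h1; move: (u k) (n ^ k) => v e IH h1.
rewrite -{1}hn. move: ha IH; move: (n.-1) => a ha IH. nia.
Qed.

Lemma uS k : u k.+1 = n.-1 * u k + n ^ k.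
Proof. by []. Qed.

Lemma a_le_pow k : n.-1 <= n.-1 ^ k.+1.
Proof.
have ha : 0 < n.-1 by rewrite -ltnS prednK // ltnW.
by rewrite expnS leq_pmulr // expn_gt0 ha.
Qed.

End Arith.

Section Core.
Variable n : nat.
Hypothesis n2 : 1 < n.
Local Notation X m := {ffun 'I_m -> 'I_n}.

Definition meet m (a b : X m) : bool := [exists i, a i == b i].
Definition ins m (l : 'I_m.+1) (x : 'I_n) (b : X m) : X m.+1 :=
  [ffun i => if unlift l i is Some j then b j else x].
Definition del m (l : 'I_m.+1) (a : X m.+1) : X m := [ffun j => a (lift l j)].
Definition sl m (l : 'I_m.+1) (x : 'I_n) (S : {set X m.+1}) : {set X m} :=
  [set b | ins l x b \in S].

Lemma meetC m (a b : X m) : meet a b = meet b a.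
Proof. by apply/existsP/existsP => -[i /eqP e]; exists i; rewrite e. Qed.

Lemma ins_l m l x (b : X m) : ins l x b l = x.
Proof. by rewrite ffunE unlift_none. Qed.

Lemma ins_lift m l x (b : X m) j : ins l x b (lift l j) = b j.
Proof. by rewrite ffunE liftK. Qed.

Lemma del_ins m l x (b : X m) : del l (ins l x b) = b.
Proof. by apply/ffunP => j; rewrite ffunE ins_lift. Qed.

Lemma ins_del m l (a : X m.+1) : ins l (a l) (del l a) = a.
Proof.
apply/ffunP => i; case: (unliftP l i) => [j ->|->]; first by rewrite ins_lift ffunE.
by rewrite ins_l.
Qed.

Lemma ins_inj m l x : injective (@ins m l x).
Proof. by move=> a b e; rewrite -(del_ins l x a) e del_ins. Qed.

Lemma meet_ins m l x y (a b : X m) :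
  meet (ins l x a) (ins l y b) = (x == y) || meet a b.
Proof.
apply/existsP/orP => [[i]|[e|/existsP[j e]]].
- case: (unliftP l i) => [j ->|->]; rewrite ?ins_lift ?ins_l => e; [right|by left].
  by apply/existsP; exists j.
- by exists l; rewrite !ins_l.
- by exists (lift l j); rewrite !ins_lift.
Qed.

Lemma mem_sl m l x (S : {set X m.+1}) b : (b \in sl l x S) = (ins l x b \in S).
Proof. by rewrite inE. Qed.

Lemma card_sl_eq m l x (S : {set X m.+1}) :
  #|sl l x S| = #|[set a in S | a l == x]|.
Proof.
have -> : [set a in S | a l == x] = ins l x @: sl l x S.
  apply/setP => a; rewrite inE; apply/andP/imsetP => [[aS /eqP ax]|[b bS ->]].
    by exists (del l a); rewrite ?mem_sl -ax ins_del.
  by rewrite -mem_sl ins_l.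
by rewrite card_imset //; apply: ins_inj.
Qed.

Lemma card_part m (i : 'I_m) (S : {set X m}) :
  #|S| = \sum_(x : 'I_n) #|[set a in S | a i == x]|.
Proof.
rewrite -sum1_card (partition_big (fun a : X m => a i) xpredT) //=.
apply: eq_bigr => x _; rewrite -sum1_card; apply: eq_bigl => a; by rewrite inE.
Qed.

Lemma card_sl m l (S : {set X m.+1}) : #|S| = \sum_x #|sl l x S|.
Proof. rewrite (card_part l); apply: eq_bigr => x _; by rewrite card_sl_eq. Qed.

End Core.

Section CHsec.
Variable n : nat.
Hypothesis n2 : 1 < n.
Local Notation X m := {ffun 'I_m -> 'I_n}.
Local Notation u := (u n).

Definition cross m (P Q : {set X m}) := forall a b, a \in P -> b \in Q -> meet a b.

Lemma crossC m (P Q : {set X m}) : cross P Q -> cross Q P.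
Proof. by move=> h a b aQ bP; rewrite meetC h. Qed.

Lemma card_le_full m (S : {set X m}) : #|S| <= n ^ m.
Proof. by apply: leq_trans (max_card _) _; rewrite card_ffun !card_ord. Qed.

Lemma sl_nonempty m (S : {set X m.+1}) l : S != set0 -> exists z, sl l z S != set0.
Proof.
case/set0Pn => a aS; exists (a l); apply/set0Pn; exists (del l a).
by rewrite mem_sl ins_del.
Qed.

Lemma cross_sl m (P Q : {set X m.+1}) l z z' :
  cross P Q -> z != z' -> cross (sl l z P) (sl l z' Q).
Proof.
move=> h zz' a b; rewrite !mem_sl => aP bQ; have := h _ _ aP bQ.
by rewrite meet_ins (negbTE zz').
Qed.

Lemma CH0 (P Q : {set X 1}) : P != set0 -> Q != set0 -> cross P Q -> #|P| + #|Q| <= (u 1).+1.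
Proof.
move=> /set0Pn[a aP] /set0Pn[b bQ] h.
have e1 (p q : X 1) : meet p q -> p = q.
  case/existsP => i /eqP e; apply/ffunP => j; by rewrite (ord1 j) -(ord1 i).
have sP : P \subset [set b].
  by apply/subsetP => p pP; rewrite inE (e1 _ _ (h _ _ pP bQ)).
have sQ : Q \subset [set a].
  by apply/subsetP => q qQ; rewrite inE (e1 _ _ (h _ _ aP qQ)).
have := subset_leq_card sP; have := subset_leq_card sQ; rewrite !cards1 /= muln0 expn0.
lia.
Qed.

Lemma ordS_neq (z : 'I_n) : ordS z != z.
Proof.
apply/eqP => /(congr1 val) /=. have := ltn_ord z.
case: (ltngtP z.+1 n) => [lt _|//|eq _].
- by rewrite modn_small //; lia.
- rewrite eq modnn => z0. lia.
Qed.

Section Step.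
Variable k : nat.
Hypothesis IH : forall P Q : {set X k.+1}, P != set0 -> Q != set0 -> cross P Q ->
  #|P| + #|Q| <= (u k.+1).+1.
Let c := (u k.+1).+1.

Lemma CH_one (P Q : {set X k.+2}) z0 : P != set0 -> Q != set0 -> cross P Q ->
  (forall w, sl ord0 w Q != set0 -> w = z0) -> #|P| + #|Q| <= (u k.+2).+1.
Proof.
move=> P0 Q0 hPQ hQ.
have eQ : #|Q| = #|sl ord0 z0 Q|.
  rewrite (card_sl ord0) (bigD1 z0) //= big1 ?addn0 // => w wz0.
  apply/eqP; rewrite cards_eq0; case: eqP => // /eqP ne.
  by move: wz0; rewrite (hQ _ ne) eqxx.
have Q0' : sl ord0 z0 Q != set0.
  by have [z Qz] := sl_nonempty ord0 Q0; rewrite -(hQ _ Qz).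
have eP : #|P| = #|sl ord0 z0 P| + \sum_(z | z != z0) #|sl ord0 z P|.
  by rewrite (card_sl ord0) (bigD1 z0).
have ha : 1 <= n.-1 by rewrite -ltnS prednK // ltnW.
have p0 := card_le_full (sl ord0 z0 P).
have q0 := card_le_full (sl ord0 z0 Q).
have q1 : 0 < #|sl ord0 z0 Q| by rewrite card_gt0.
rewrite (uS n k.+1) eP eQ.
case: (boolP [exists z, (z != z0) && (sl ord0 z P != set0)]) => [/existsP[z1 /andP[z10 P1]]|hP].
- have qc : forall z, z != z0 -> #|sl ord0 z P| + #|sl ord0 z0 Q| <= c.
    move=> z zz0; case: (boolP (sl ord0 z P == set0)) => [/eqP->|Pz]; last first.
      by apply: IH => //; exact: cross_sl.
    rewrite cards0 add0n. have := IH P1 Q0' (cross_sl hPQ z10). rewrite /c. lia.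
  have hs : \sum_(z | z != z0) (#|sl ord0 z P| + #|sl ord0 z0 Q|) <= \sum_(z | z != z0) c.
    by apply: leq_sum.
  rewrite big_split /= !sum_nat_const cardC1 card_ord /c in hs.
  move: hs p0 q1 ha; rewrite /c.
  move: (\sum_(z | z != z0) #|sl ord0 z P|) (#|sl ord0 z0 P|) (#|sl ord0 z0 Q|) (u k.+1) (n.-1) (n ^ k.+1).
  move=> S p q v a e. nia.
- rewrite big1 ?addn0; last first.
    move=> z zz0; apply/eqP; rewrite cards_eq0; case: eqP => // /eqP ne.
    by move/negP: hP; case; apply/existsP; exists z; rewrite zz0 ne.
  have := u_low n2 k.+1. lia.
Qed.

Lemma CH_pair (P Q : {set X k.+2}) z1 z2 w1 w2 : cross P Q ->
  z1 != z2 -> sl ord0 z1 P != set0 -> sl ord0 z2 P != set0 ->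
  w1 != w2 -> sl ord0 w1 Q != set0 -> sl ord0 w2 Q != set0 ->
  #|P| + #|Q| <= (u k.+2).+1.
Proof.
move=> hPQ z12 Pz1 Pz2 w12 Qw1 Qw2.
have hP : forall w, sl ord0 w Q != set0 -> #|sl ord0 w Q| <= c.
  move=> w Qw. have [z zw Pz] : exists2 z, z != w & sl ord0 z P != set0.
    case: (eqVneq z1 w) => [e|ne]; last by exists z1.
    by exists z2 => //; rewrite -e eq_sym.
  have := IH Pz Qw (cross_sl hPQ zw). rewrite /c. lia.
have hQ : forall z, sl ord0 z P != set0 -> #|sl ord0 z P| <= c.
  move=> z Pz. have [w zw Qw] : exists2 w, z != w & sl ord0 w Q != set0.
    case: (eqVneq w1 z) => [e|ne]; last by exists w1; rewrite // eq_sym.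
    by exists w2 => //; rewrite -e.
  have := IH Pz Qw (cross_sl hPQ zw). rewrite /c. lia.
have ht : forall z, #|sl ord0 z P| + #|sl ord0 (ordS z) Q| <= c.
  move=> z. case: (boolP (sl ord0 z P == set0)) => [/eqP->|Pz];
    case: (boolP (sl ord0 (ordS z) Q == set0)) => [/eqP->|Qz].
  - by rewrite cards0.
  - by rewrite cards0 add0n; exact: hP.
  - by rewrite cards0 addn0; exact: hQ.
  - by apply: IH => //; apply: cross_sl => //; rewrite eq_sym ordS_neq.
have hs : #|P| + #|Q| <= n * c.
  rewrite (card_sl ord0 Q) (reindex_inj (@ordS_inj n)) (card_sl ord0 P) -big_split /=.
  apply: (@leq_trans (\sum_(i : 'I_n) c)); first by apply: leq_sum => i _; exact: ht.
  by rewrite sum_nat_const card_ord.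
apply: (leq_trans hs); rewrite /c (uS n k.+1).
have hn : (n.-1).+1 = n by rewrite prednK // ltnW.
move: hn; have := uE n2 k.+1; have := a_le_pow n2 k.
move: (u k.+1) (n ^ k.+1) (n.-1 ^ k.+1) (n.-1) => v e f a. nia.
Qed.

Lemma CH_step (P Q : {set X k.+2}) : P != set0 -> Q != set0 -> cross P Q ->
  #|P| + #|Q| <= (u k.+2).+1.
Proof.
move=> P0 Q0 hPQ.
case: (boolP [exists z1, exists z2,
   [&& z1 != z2, sl ord0 z1 P != set0 & sl ord0 z2 P != set0]]) => [hp|hp].
- case: (boolP [exists w1, exists w2,
   [&& w1 != w2, sl ord0 w1 Q != set0 & sl ord0 w2 Q != set0]]) => [hq|hq].
  + move/existsP: hp => [z1 /existsP[z2 /and3P[? ? ?]]].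
    move/existsP: hq => [w1 /existsP[w2 /and3P[? ? ?]]].
    exact: (@CH_pair P Q z1 z2 w1 w2).
  + have [z0 Qz0] := sl_nonempty ord0 Q0.
    apply: (@CH_one P Q z0) => // w Qw; apply/eqP; apply/negPn/negP => wz.
    move/negP: hq; apply; apply/existsP; exists w; apply/existsP; exists z0.
    by rewrite wz Qw Qz0.
- have [z0 Pz0] := sl_nonempty ord0 P0.
  rewrite addnC; apply: (@CH_one Q P z0) => //; first exact: crossC.
  move=> w Pw; apply/eqP; apply/negPn/negP => wz.
  move/negP: hp; apply; apply/existsP; exists w; apply/existsP; exists z0.
  by rewrite wz Pw Pz0.
Qed.

End Step.

Lemma CH k (P Q : {set X k.+1}) : P != set0 -> Q != set0 -> cross P Q ->
  #|P| + #|Q| <= (u k.+1).+1.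
Proof. elim: k P Q => [|k IH] P Q; [exact: CH0 | exact: (CH_step IH)]. Qed.

End CHsec.

Section MainSec.
Variable n : nat.
Hypothesis n2 : 1 < n.
Local Notation X m := {ffun 'I_m -> 'I_n}.
Local Notation u := (u n).

Definition inter m (F : {set X m}) := forall a b, a \in F -> b \in F -> meet a b.
Definition nonstar m (F : {set X m}) := forall l x, exists2 a, a \in F & a l != x.
Definition Bd k := if k is k'.+1 then u k.+1 + n.-1 else 1.

Lemma two_cases (i t : 'I_2) : t = i \/ t = lift i ord0.
Proof. case: (unliftP i t) => [t' ->|->]; [right; by rewrite (ord1 t') | by left]. Qed.

Lemma Main2 (F : {set X 2}) : inter F -> nonstar F -> #|F| <= 1.
Proof.
move=> hI hN; rewrite leqNgt; apply/negP => /card_gt1P [A [B [AF BF AB]]].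
have /existsP [i /eqP eAB] := hI _ _ AF BF.
set j := lift i ord0.
have ji : j != i by rewrite eq_sym neq_lift.
have nAB : A j != B j.
  apply: contra AB => /eqP e; apply/eqP/ffunP => t.
  by case: (two_cases i t) => ->.
have [C CF Ci] := hN i (A i).
have eCA : C j = A j.
  have /existsP [t /eqP e] := hI _ _ CF AF.
  case: (two_cases i t) e => -> // e; by rewrite e eqxx in Ci.
have eCB : C j = B j.
  have /existsP [t /eqP e] := hI _ _ CF BF.
  case: (two_cases i t) e => -> // e; by rewrite e -eAB eqxx in Ci.
by move: nAB; rewrite -eCA -eCB eqxx.
Qed.

Lemma sum_ind (T : finType) (A : {set T}) : \sum_(i : T) ((i \in A) : nat) = #|A|.
Proof. by rewrite -sum1_card [RHS]big_mkcond; apply: eq_bigr => i _; case: (i \in A). Qed.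

Lemma Bd_step k : n * Bd k <= Bd k.+1.
Proof.
have hn : (n.-1).+1 = n by rewrite prednK // ltnW.
have ha : 0 < n.-1 by rewrite -ltnS hn.
case: k => [|k].
  rewrite /Bd muln1 (uS n 1) /= muln0 expn0 add0n expn1.
  move: hn ha; move: (n.-1) => a. lia.
rewrite /Bd (uS n k.+2).
have e := uE n2 k.+2.
have p : n.-1 ^ 2 <= n.-1 ^ k.+2 by rewrite leq_pexp2l.
have g : n.-1 ^ 2 = n.-1 * n.-1 by rewrite expnS expn1.
move: hn e p g; move: (u k.+2) (n ^ k.+2) (n.-1 ^ k.+2) (n.-1 ^ 2) (n.-1) => v e f g a.
move=> hn' e' p'. nia.
Qed.

End MainSec.

Section MainStep.
Variable n : nat.
Hypothesis n2 : 1 < n.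
Local Notation X m := {ffun 'I_m -> 'I_n}.
Local Notation u := (u n).
Variable k : nat.
Hypothesis IH : forall F : {set X k.+2}, inter F -> nonstar F -> #|F| <= Bd n k.
Variable F : {set X k.+3}.
Hypothesis hI : inter F.
Hypothesis hN : nonstar F.

Definition Yb (b : X k.+2) := [set x | ins ord0 x b \in F].
Definition Hs := [set b | 1 < #|Yb b|].
Definition Us := [set b | Yb b != set0].

Lemma memY x b : (x \in Yb b) = (ins ord0 x b \in F).
Proof. by rewrite inE. Qed.
Lemma memH b : (b \in Hs) = (1 < #|Yb b|).
Proof. by rewrite inE. Qed.
Lemma memU b : (b \in Us) = (Yb b != set0).
Proof. by rewrite inE. Qed.

Lemma le_ind (Y : {set 'I_n}) : #|Y| <= n.-1 * (1 < #|Y|) + (0 < #|Y|).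
Proof.
have hy : #|Y| <= n by apply: leq_trans (max_card _) _; rewrite card_ord.
have hn : n.-1 + 1 = n by rewrite addn1 prednK // ltnW.
case: (ltnP 1 #|Y|) => h.
  rewrite (ltnW h) muln1. move: hy hn; move: #|Y| (n.-1) => y a. lia.
rewrite muln0 add0n. move: h; move: #|Y| => y. by case: y => [|[|y]].
Qed.

Lemma cardF : #|F| <= n.-1 * #|Hs| + #|Us|.
Proof.
have e1 : #|F| = \sum_b #|Yb b|.
  rewrite (card_sl ord0 F).
  transitivity (\sum_x \sum_b ((b \in sl ord0 x F) : nat)).
    by apply: eq_bigr => x _; rewrite sum_ind.
  rewrite exchange_big; apply: eq_bigr => b _; rewrite -sum_ind.
  apply: eq_bigr => x _. by rewrite memY mem_sl.
rewrite e1 -!sum_ind big_distrr -big_split.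
apply: leq_sum => b _.
rewrite memH memU -card_gt0; exact: le_ind.
Qed.

Lemma meetF x y a b : x != y -> ins ord0 x a \in F -> ins ord0 y b \in F -> meet a b.
Proof. move=> xy aF bF; have := hI aF bF. by rewrite meet_ins (negbTE xy). Qed.

Lemma heavy_meet h b : h \in Hs -> b \in Us -> meet h b.
Proof.
rewrite memH memU => /card_gt1P [x1 [x2 [h1 h2 x12]]] /set0Pn [y hy].
move: h1 h2 hy; rewrite !memY => h1 h2 hy.
case: (eqVneq x1 y) => [e|ne]; last exact: (meetF ne h1 hy).
apply: (meetF _ h2 hy); by rewrite -e eq_sym.
Qed.

Lemma HU : Hs \subset Us.
Proof. apply/subsetP => b; rewrite memH memU -card_gt0; exact: ltnW. Qed.

Lemma inU a : a \in F -> del ord0 a \in Us.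
Proof. move=> aF; rewrite memU; apply/set0Pn; exists (a ord0); by rewrite memY ins_del. Qed.

Lemma caseH0 : Hs = set0 -> #|F| <= Bd n k.+1.
Proof.
move=> H0.
have [A AF _] := hN ord0 (Ordinal (ltnW n2)).
have [A' A'F A'x] := hN ord0 (A ord0).
set x0 := A ord0 in A'x.
set P := sl ord0 x0 F.
set Q := \bigcup_(y | y != x0) sl ord0 y F.
have P0 : P != set0.
  apply/set0Pn; exists (del ord0 A); by rewrite mem_sl ins_del.
have Q0 : Q != set0.
  apply/set0Pn; exists (del ord0 A'); apply/bigcupP; exists (A' ord0) => //.
  by rewrite mem_sl ins_del.
have hc : cross P Q.
  move=> a b; rewrite mem_sl => aP /bigcupP [y yx0]; rewrite mem_sl => bQ.
  by apply: (meetF _ aP bQ); rewrite eq_sym.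
have hCH := CH n2 P0 Q0 hc.
have sU : Us \subset P :|: Q.
  apply/subsetP => b; rewrite memU => /set0Pn [y]; rewrite memY => hy.
  rewrite inE; case: (eqVneq y x0) => [e|ne].
    by rewrite mem_sl -e hy.
  by apply/orP; right; apply/bigcupP; exists y => //; rewrite mem_sl.
have h1 := cardF; rewrite H0 cards0 muln0 add0n in h1.
have h2 := subset_leq_card sU.
have h3 : #|P :|: Q| <= #|P| + #|Q| by rewrite cardsU leq_subr.
have ha : 1 <= n.-1 by rewrite -ltnS prednK // ltnW.
rewrite /Bd. move: h1 h2 h3 hCH ha.
move: #|F| #|Us| #|P :|: Q| #|P| #|Q| (u k.+2) (n.-1) => a b c d e f g. lia.
Qed.

Lemma caseHstar (l : 'I_k.+2) v : Hs != set0 -> (forall h, h \in Hs -> h l = v) ->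
  #|F| <= Bd n k.+1.
Proof.
move=> H0 hv.
set A' := sl l v Hs.
have eH : #|Hs| = #|A'|.
  rewrite (card_sl l Hs) (bigD1 v) //= big1 ?addn0 // => w wv.
  apply/eqP; rewrite cards_eq0; apply/eqP/setP => b; rewrite in_set0 mem_sl.
  apply/negP => hb; move: wv; by rewrite -(hv _ hb) ins_l eqxx.
have eU : #|Us| = #|sl l v Us| + \sum_(w | w != v) #|sl l w Us|.
  by rewrite (card_sl l Us) (bigD1 v).
have cr : forall w, w != v -> cross A' (sl l w Us).
  move=> w wv a b; rewrite !mem_sl => ha hb. have := heavy_meet ha hb.
  by rewrite meet_ins eq_sym (negbTE wv).
have A0 : A' != set0.
  case/set0Pn: H0 => h hH; apply/set0Pn; exists (del l h).
  by rewrite mem_sl -(hv _ hH) ins_del.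
have [A AF Al] := hN (lift ord0 l) v.
have bU := inU AF.
have ebl : del ord0 A l = A (lift ord0 l) by rewrite ffunE.
have w0v : del ord0 A l != v by rewrite ebl.
have Uw0 : sl l (del ord0 A l) Us != set0.
  by apply/set0Pn; exists (del l (del ord0 A)); rewrite mem_sl ins_del.
have hA := CH n2 A0 Uw0 (cr _ w0v).
have hw : forall w, w != v -> #|A'| + #|sl l w Us| <= (u k.+1).+1.
  move=> w wv; case: (boolP (sl l w Us == set0)) => [/eqP->|Uw]; last first. have hh := CH n2 A0 Uw (cr w wv). exact: hh.
  rewrite cards0 addn0. move: hA; lia.
have hs : \sum_(w | w != v) (#|A'| + #|sl l w Us|) <= \sum_(w | w != v) (u k.+1).+1.
  by apply: leq_sum.
have e1 : \sum_(w | w != v) (#|A'| + #|sl l w Us|) = n.-1 * #|A'| + \sum_(w | w != v) #|sl l w Us|.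
  by rewrite big_split sum_nat_const cardC1 card_ord.
rewrite e1 sum_nat_const cardC1 card_ord in hs.
have hv' := card_le_full (sl l v Us).
apply: leq_trans (cardF) _. rewrite /Bd (uS n k.+1) eH eU.
move: hs hv'.
move: #|A'| #|sl l v Us| (\sum_(w | w != v) #|sl l w Us|) (u k.+1) (n ^ k.+1) (n.-1) => a b c d e f.
nia.
Qed.

Lemma caseHnon : (forall l v, exists2 h, h \in Hs & h l != v) -> #|F| <= Bd n k.+1.
Proof.
move=> hH.
have hz : forall z : 'I_n, #|Hs| + #|[set b in Us :\: Hs | b ord0 == z]| <= Bd n k.
  move=> z. set C := [set b in Us :\: Hs | b ord0 == z].
  have dj : Hs :&: C = set0.
    apply/setP => b; rewrite !inE; apply/negP => /and3P [bH /andP [bnH _] _].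
    by rewrite bH in bnH.
  have -> : #|Hs| + #|C| = #|Hs :|: C| by rewrite cardsU dj cards0 subn0.
  apply: IH.
    have memC : forall c, c \in C -> (c \in Us) && (c ord0 == z).
      move=> c; rewrite in_set in_setD => /andP [/andP [_ cU] cz]; by rewrite cU cz.
    move=> a b /setUP [aH|/memC /andP [aU az]] /setUP [bH|/memC /andP [bU bz]].
    - exact: (heavy_meet aH (subsetP HU _ bH)).
    - exact: heavy_meet.
    - by rewrite meetC; apply: heavy_meet.
    - by apply/existsP; exists ord0; rewrite (eqP az) (eqP bz).
  move=> l x; have [h hH1 hl] := hH l x; exists h => //; by rewrite in_setU hH1.
have hs : \sum_(z : 'I_n) (#|Hs| + #|[set b in Us :\: Hs | b ord0 == z]|) <= \sum_(z : 'I_n) Bd n k.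
  by apply: leq_sum => z _; exact: hz.
have e1 : \sum_(z : 'I_n) (#|Hs| + #|[set b in Us :\: Hs | b ord0 == z]|) = n * #|Hs| + #|Us :\: Hs|.
  by rewrite big_split -card_part sum_nat_const card_ord.
rewrite e1 sum_nat_const card_ord in hs.
have eU : #|Us| = #|Hs| + #|Us :\: Hs|.
  by rewrite -(cardsID Hs Us) (setIidPr HU).
apply: leq_trans (cardF) _; apply: leq_trans (Bd_step n2 k).
rewrite eU; apply: leq_trans hs.
have hn : n.-1 + 1 = n by rewrite addn1 prednK // ltnW.
move: hn; move: #|Hs| #|Us :\: Hs| (n.-1) => a b c hn. nia.
Qed.

Lemma Main_step : #|F| <= Bd n k.+1.
Proof.
case: (eqVneq Hs set0) => [H0|H0]; first exact: caseH0.
case: (boolP [exists l, exists v, [forall h in Hs, h l == v]]) => [/existsP [l /existsP [v /forall_inP hv]]|hns].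
  by apply: (caseHstar H0) => h hh; apply/eqP; apply: hv.
apply: caseHnon => l v.
case: (boolP [exists h in Hs, h l != v]) => [/exists_inP [h ? ?]|hh]; first by exists h.
move/negP: hns; case; apply/existsP; exists l; apply/existsP; exists v.
apply/forall_inP => h hH; apply: contraR hh => hne; apply/exists_inP; by exists h.
Qed.

End MainStep.

Lemma Main n (n2 : 1 < n) k (F : {set {ffun 'I_k.+2 -> 'I_n}}) :
  inter F -> nonstar F -> #|F| <= Bd n k.
Proof.
elim: k F => [|k IH] F hI hN; first exact: Main2.
exact: (Main_step n2 IH hI hN).
Qed.

Lemma bigminn_le (I : finType) (P : pred I) (F : I -> nat) x j :
  P j -> \big[minn/x]_(i | P i) F i <= F j.
Proof. move=> Pj. rewrite -minEnat. exact: (Order.TotalTheory.bigmin_le_cond x F Pj). Qed.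

Lemma bigminn_gt (I : finType) (P : pred I) (F : I -> nat) x m :
  m < x -> (forall i, P i -> m < F i) -> m < \big[minn/x]_(i | P i) F i.
Proof.
move=> h1 h2; apply: (big_ind (fun y => m < y)) => //.
by move=> a b ha hb; rewrite leq_min ha hb.
Qed.

Section Bridge.
Variables (r n : nat).
Hypothesis n2 : 1 < n.
Hypothesis r0 : 0 < r.
Local Notation ns := (fun _ : 'I_r => n).
Local Notation E := (edge ns).
Local Notation Y := {ffun 'I_r -> 'I_n}.

Lemma disj_meet (A B : E) : disjoint_edges A B = ~~ meet (A : Y) (B : Y).
Proof. by rewrite /disjoint_edges /meet negb_exists. Qed.

Lemma nu_le1 (F : {set E}) : inter (F : {set Y}) -> nu F <= 1.
Proof.
move=> hI; apply/bigmax_leqP => M /andP [sMF hM].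
rewrite leqNgt; apply/negP => /card_gt1P [A [B [AM BM AB]]].
move/forall_inP: hM => /(_ A AM) /forall_inP /(_ B BM) /implyP /(_ AB).
by rewrite disj_meet (hI A B) // (subsetP sMF).
Qed.

Lemma inter_of_nu (F : {set E}) : nu F <= 1 -> inter (F : {set Y}).
Proof.
move=> hnu a b aF bF; case: (eqVneq a b) => [e|ab].
  rewrite e; apply/existsP; exists (Ordinal r0); exact: eqxx.
apply: contraT => hd.
have h2 : #|([set a; b] : {set E})| <= nu F.
  apply: leq_bigmax_cond; apply/andP; split.
    by apply/subsetP => x; rewrite !inE => /orP [/eqP->|/eqP->].
  apply/forall_inP => x; rewrite !inE => hx; apply/forall_inP => y; rewrite !inE => hy.
  apply/implyP => xy; rewrite disj_meet.
  case/orP: hx => /eqP ex; case/orP: hy => /eqP ey; subst x y => //.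
  - by move: xy; rewrite eqxx.
  - by rewrite meetC.
  - by move: xy; rewrite eqxx.
move: h2; rewrite cards2 ab => h2.
by move: (leq_trans h2 hnu).
Qed.

Lemma tau_le (F : {set E}) (T : {set (vertex ns)}) : Defs.is_transversal F T -> tau F <= #|T|.
Proof. move=> hT; rewrite /tau. exact: (bigminn_le _ _ hT). Qed.

Lemma nonstar_of_tau (F : {set E}) : 1 < tau F -> nonstar (F : {set Y}).
Proof.
move=> ht l x.
case: (boolP [exists a in F, (a : Y) l != x]) => [/exists_inP [a ? ?]|h]; first by exists a.
have hT : Defs.is_transversal F [set (existT (fun l => 'I_(ns l)) l x : vertex ns)].
  rewrite /Defs.is_transversal; apply/forall_inP => A AF; apply/existsP; exists l; rewrite inE /vertex_of.
  case: (eqVneq ((A : Y) l) x) => [e|ne].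
    by apply/eqP; congr Tagged.
  by move/negP: h; case; apply/exists_inP; exists A.
by have := leq_trans ht (tau_le hT); rewrite cards1.
Qed.

Lemma tau_of_nonstar (F : {set E}) : nonstar (F : {set Y}) -> 1 < tau F.
Proof.
move=> hN; rewrite /tau; apply: bigminn_gt.
  apply/card_gt1P.
  exists (existT (fun l => 'I_(ns l)) (Ordinal r0) (Ordinal (ltnW n2) : 'I_n) : vertex ns).
  exists (existT (fun l => 'I_(ns l)) (Ordinal r0) (Ordinal n2 : 'I_n) : vertex ns).
  rewrite !in_setT; split => //.
  by rewrite eq_Tagged.
move=> T hT; rewrite ltnNge; apply/negP => hle.
have [A AF _] := hN (Ordinal r0) (Ordinal (ltnW n2)).
move: hT; rewrite /Defs.is_transversal => /forall_inP hT.
have [l hl] := existsP (hT A AF).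
have [B BF Bl] := hN l ((A : Y) l).
have [l' hl'] := existsP (hT B BF).
have := card_le1P hle (vertex_of A l) hl (vertex_of B l'); rewrite hl' => /esym e0.
have el : l' = l by move: (congr1 (@tag _ _) (eqP e0)).
subst l'. have := congr1 (tagged_as (vertex_of A l)) (eqP e0).
rewrite /vertex_of !tagged_asE => e.
by move: Bl; rewrite e eqxx.
Qed.

End Bridge.

Section Constr.
Variable n : nat.
Hypothesis n2 : 1 < n.
Variable k : nat.
Local Notation X m := {ffun 'I_m -> 'I_n}.

Definition i0 : 'I_n := Ordinal (ltnW n2).
Definition i1 : 'I_n := Ordinal n2.
Definition one : X k.+2 := [ffun _ => i1].

Definition part1 : {set X k.+3} := [set a : X k.+3 | (a ord0 == i0) && meet (del ord0 a) one].
Definition part2 : {set X k.+3} := [set a : X k.+3 | (a ord0 != i0) && (del ord0 a == one)].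
Definition F0 := part1 :|: part2.

Lemma i01 : i0 != i1. Proof. by []. Qed.

Lemma meet_del (a b : X k.+3) :
  meet a b = (a ord0 == b ord0) || meet (del ord0 a) (del ord0 b).
Proof. by have := meet_ins ord0 (a ord0) (b ord0) (del ord0 a) (del ord0 b); rewrite !ins_del. Qed.

Lemma meet_one : meet one one.
Proof. by apply/existsP; exists ord0. Qed.

Lemma inter_F0 : inter F0.
Proof.
move=> a b; rewrite !in_setU !inE meet_del.
move=> /orP [/andP [a0 ma]|/andP [a0 /eqP da]] /orP [/andP [b0 mb]|/andP [b0 /eqP db]].
- by rewrite (eqP a0) (eqP b0) eqxx.
- by rewrite db ma orbT.
- by rewrite da meetC mb orbT.
- by rewrite da db meet_one orbT.
Qed.

Lemma nonstar_F0 : nonstar F0.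
Proof.
move=> l x.
have p1 : ins ord0 i0 one \in F0 by rewrite in_setU inE ins_l del_ins eqxx meet_one.
case: (unliftP ord0 l) => [j ->|->].
-
  case: (eqVneq x i1) => [->|xi1]; last by exists (ins ord0 i0 one); rewrite // ins_lift ffunE eq_sym.
  set bj : X k.+2 := [ffun t => if t == j then i0 else i1].
  exists (ins ord0 i0 bj); last by rewrite ins_lift ffunE eqxx i01.
  rewrite in_setU inE ins_l del_ins eqxx /=; apply/orP; left.
  apply/existsP; exists (lift j ord0); rewrite !ffunE.
  by rewrite [lift j ord0 == j]eq_sym (negbTE (neq_lift j ord0)).
- case: (eqVneq x i0) => [->|xi0]; last by exists (ins ord0 i0 one); rewrite // ins_l eq_sym.
  exists (ins ord0 i1 one); last by rewrite ins_l eq_sym i01.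
  by rewrite in_setU !inE ins_l del_ins eqxx eq_sym i01.
Qed.

Lemma card_part1 : #|part1| = u n k.+2.
Proof.
have h : #|part1| = #|[set b : X k.+2 | meet b one]|.
  rewrite (card_sl ord0) (bigD1 i0) //= big1 ?addn0; last first.
    move=> x xi0; apply/eqP; rewrite cards_eq0; apply/eqP/setP => b.
    by rewrite in_set0 mem_sl inE ins_l (negbTE xi0).
  by apply: eq_card => b; rewrite mem_sl !inE ins_l del_ins eqxx.
rewrite h.
have c1 : #|[set b : X k.+2 | ~~ meet b one]| = n.-1 ^ k.+2.
  have -> : [set b : X k.+2 | ~~ meet b one] = [set b in ffun_on (predC1 i1)].
    apply/setP => b; rewrite !inE; apply/negP/ffun_onP => [h' t|h' /existsP [t]].
      rewrite inE; apply/negP => /eqP e; apply: h'; apply/existsP; exists t; by rewrite ffunE e.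
    by rewrite ffunE; move: (h' t); rewrite inE => /negbTE ->.
  by rewrite cardsE card_ffun_on cardC1 !card_ord.
have c2 := cardsC [set b : X k.+2 | meet b one].
have e2 : ~: [set b : X k.+2 | meet b one] = [set b | ~~ meet b one].
  by apply/setP => b; rewrite !inE.
rewrite e2 c1 card_ffun !card_ord in c2.
have := uE n2 k.+2. lia.
Qed.

Lemma card_part2 : #|part2| = n.-1.
Proof.
rewrite (card_sl ord0).
transitivity (\sum_(x : 'I_n) ((x \in [set~ i0]) : nat)); last first.
  by rewrite sum_ind cardsC1 card_ord.
apply: eq_bigr => x _; rewrite in_setC1.
case: (eqVneq x i0) => [->|xi0].
  apply/eqP; rewrite cards_eq0; apply/eqP/setP => b.
  by rewrite in_set0 mem_sl inE ins_l eqxx.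
have -> : sl ord0 x part2 = [set one].
  by apply/setP => b; rewrite mem_sl !inE ins_l del_ins xi0.
by rewrite cards1.
Qed.

Lemma card_F0 : #|F0| = u n k.+2 + n.-1.
Proof.
rewrite /F0 cardsU card_part1 card_part2.
have -> : part1 :&: part2 = set0.
  apply/setP => a; rewrite !inE; apply/negP => /andP [/andP [a0 _] /andP [a0' _]].
  by rewrite a0 in a0'.
by rewrite cards0 subn0.
Qed.

End Constr.

Theorem theorem1p1 (r n : nat) : 3 <= r -> 2 <= n ->
  m0 (fun _ : 'I_r => n) 1 = n ^ r.-1 - (n.-1) ^ r.-1 + n.-1.
Proof.
case: r => [|[|[|k]]] // _ n2.
have eR : n ^ k.+2 - n.-1 ^ k.+2 + n.-1 = Bd n k.+1.
  by rewrite /Bd -(uE n2 k.+2) addnK.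
change (m0 (fun _ : 'I_k.+3 => n) 1 = n ^ k.+2 - n.-1 ^ k.+2 + n.-1).
rewrite eR; apply/eqP; rewrite eqn_leq; apply/andP; split.
  apply/bigmax_leqP => F /andP [hnu htau].
  have hI := inter_of_nu (ltn0Sn k.+2) hnu.
  have hN := nonstar_of_tau htau.
  exact: (Main n2 hI hN).
rewrite /Bd -(@card_F0 n n2 k).
apply: (leq_bigmax_cond (F0 n2 k : {set edge (fun _ : 'I_k.+3 => n)})).
apply/andP; split.
  exact: (@nu_le1 k.+3 n (F0 n2 k) (@inter_F0 n n2 k)).
exact: (@tau_of_nonstar k.+3 n n2 (ltn0Sn k.+2) (F0 n2 k) (@nonstar_F0 n n2 k)).
Qed.
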